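(* Let $A$ be a finite abelian group. There exists a non-abelian finite group $G$ having a subgroup $B\cong A$ with $\mathcal{CD}(G)=\{B\}$ if and only if $A\neq 1$, $A\not\cong\mathbb{Z}_2$, $A\not\cong\mathbb{Z}_4$, and $A\not\cong\mathbb{Z}_2\times\mathbb{Z}_4$.
   Context: For a finite group $G$ and $H\le G$, $m_G(H)=|H|\,|C_G(H)|$, $m^*(G)=\max\{m_G(H)\mid H\le G\}$, and the Chermak-Delgado lattice is $\mathcal{CD}(G)=\{H\le G\mid m_G(H)=m^*(G)\}$. *)

(* Defs.v *)
From mathcomp Require Import all_boot all_order all_fingroup all_algebra.
From mathcomp Require Import all_solvable.
Set Implicit Arguments. Unset Strict Implicit. Unset Printing Implicit Defensive.
Local Open Scope group_scope.

Definition mCD (gT : finGroupType) (G H : {set gT}) : nat := #|H| * #|'C_G(H)|.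

Definition mstarCD (gT : finGroupType) (G : {set gT}) : nat :=
  \max_(H : {set gT} | group_set H && (H \subset G)) mCD G H.

Definition CDlattice (gT : finGroupType) (G : {set gT}) : {set {set gT}} :=
  [set H : {set gT} | [&& group_set H, H \subset G & mCD G H == mstarCD G]].

(* Main.v *)
Set Warnings "-notation-overridden,-ambiguous-paths".
Require Import Defs.
From mathcomp Require Import all_boot all_order all_fingroup all_algebra.
From mathcomp Require Import all_solvable.
From mathcomp Require Import zify.
Set Implicit Arguments. Unset Strict Implicit. Unset Printing Implicit Defensive.
Local Open Scope group_scope.

Section CDbasics.
Variable hT : finGroupType.
Implicit Types G H B : {group hT}.

Lemma mCD_le_star G H : H \subset G -> mCD G H <= mstarCD G.
Proof.
move=> sHG; rewrite /mstarCD.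
by apply: (@leq_bigmax_cond _ (fun X : {set hT} => group_set X && (X \subset G)) (mCD G) H); rewrite groupP.
Qed.

Lemma star_le G n : (forall H, H \subset G -> mCD G H <= n) -> mstarCD G <= n.
Proof.
move=> Hn; apply/bigmax_leqP => X /andP[gX sXG].
exact: (Hn (Group gX)).
Qed.

Lemma CD_memE G H : ((H : {set hT}) \in CDlattice G) = (H \subset G) && (mCD G H == mstarCD G).
Proof. by rewrite /CDlattice inE groupP. Qed.

Lemma card_le_index G H B : H \subset G -> B \subset G ->
  #|H| <= #|G : B| * #|H :&: B|.
Proof.
move=> sHG sBG.
have B0 : 0 < #|B| by rewrite cardG_gt0.
rewrite -(leq_pmul2r B0) mul_cardG.
have -> : (#|G : B| * #|H :&: B| * #|B| = #|G| * #|H :&: B|)%N.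
  by rewrite -(Lagrange sBG) [(#|B| * _)%N]mulnC mulnAC.
rewrite leq_mul2r; apply/orP; right.
apply: subset_leq_card; exact: mul_subG.
Qed.

End CDbasics.

Section Crit.
Variable hT : finGroupType.
Implicit Types G H B : {group hT}.

Lemma crit G B : B \subset G -> abelian B -> (B : {set hT}) != G ->
  (forall g, g \in G -> g \notin B -> (#|G : B| * #|'C_B[g]| < #|B|)%N) ->
  CDlattice G = [set (B : {set hT})] /\ ~~ abelian G.
Proof.
move=> sBG abB neBG key.
set n := #|G : B|; set b := #|B|.
have n0 : 0 < n by rewrite indexg_gt0.
have b0 : 0 < b by rewrite cardG_gt0.
have cBall : forall g, g \in G -> B \subset 'C[g] -> g \in B.
  move=> g Gg sBc; apply/negPn/negP => nBg.
  have := key g Gg nBg; rewrite (setIidPl sBc) -/b.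
  by rewrite ltnNge leq_pmull.
have cB : 'C_G(B) = B.
  apply/eqP; rewrite eqEsubset; apply/andP; split; last by rewrite subsetI sBG.
  apply/subsetP => g /setIP[Gg cg]; apply: cBall => //.
  by rewrite sub_cent1.
have mB : mCD G B = (b * b)%N by rewrite /mCD cB.
have bound : forall H, H \subset G -> (H : {set hT}) != B -> mCD G H < b * b.
  move=> H sHG neHB; rewrite /mCD.
  set C := 'C_G(H).
  have sCG : C \subset G := subsetIl _ _.
  have hC := card_le_index sCG sBG; have hH := card_le_index sHG sBG.
  rewrite -/n in hC hH.
  have cmb : forall g, g \in G -> g \notin B -> #|'C_B[g]| <= b.
    by move=> g _ _; apply: subset_leq_card; apply: subsetIl.
  case: (boolP (H \subset B)) => sHB.
    have ltHb : #|H| < b by apply: proper_card; rewrite properEneq neHB.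
    case: (boolP (C \subset B)) => sCB.
      apply: (@leq_ltn_trans (#|H| * b)); first by rewrite leq_mul2l (subset_leq_card sCB) orbT.
      by rewrite ltn_pmul2r.
    case/subsetPn: sCB => g Cg nBg.
    have Gg : g \in G by case/setIP: Cg.
    have sHc : H \subset 'C_B[g].
      by rewrite subsetI sHB sub_cent1; case/setIP: Cg.
    have hCb : #|C| <= n * b by apply: (leq_trans hC); rewrite leq_mul2l (subset_leq_card (subsetIr _ _)) orbT.
    apply: (@leq_ltn_trans (#|'C_B[g]| * (n * b))).
      by apply: leq_mul => //; apply: subset_leq_card.
    by rewrite mulnA [(_ * n)%N]mulnC ltn_pmul2r // key.
  case/subsetPn: sHB => h Hh nBh.
  have Gh : h \in G by apply: (subsetP sHG).
  have sCBh : C :&: B \subset 'C_B[h].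
    apply/subsetP => x /setIP[/setIP[_ cx] Bx]; apply/subcent1P; split => //.
    by first [exact: (centP cx h Hh) | exact: commute_sym (centP cx h Hh)].
  have hC2 : #|C| <= n * #|'C_B[h]|.
    by apply: (leq_trans hC); rewrite leq_mul2l (subset_leq_card sCBh) orbT.
  case: (boolP (C \subset B)) => sCB.
    have hC3 : #|C| <= #|'C_B[h]|.
      by apply: (leq_trans _ (subset_leq_card sCBh)); rewrite (setIidPl sCB).
    have hH2 : #|H| <= n * b.
      by apply: (leq_trans hH); rewrite leq_mul2l (subset_leq_card (subsetIr _ _)) orbT.
    apply: (@leq_ltn_trans (n * b * #|'C_B[h]|)); first exact: leq_mul.
    by rewrite mulnAC ltn_pmul2r // key.
  case/subsetPn: sCB => g Cg nBg.
  have Gg : g \in G by case/setIP: Cg.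
  have sHBg : H :&: B \subset 'C_B[g].
    apply/subsetP => x /setIP[Hx Bx]; apply/subcent1P; split => //.
    case/setIP: Cg => _ /centP cg; by first [exact: (cg x Hx) | exact: commute_sym (cg x Hx)].
  have hH2 : #|H| <= n * #|'C_B[g]|.
    by apply: (leq_trans hH); rewrite leq_mul2l (subset_leq_card sHBg) orbT.
  apply: (@leq_ltn_trans (n * #|'C_B[g]| * (n * #|'C_B[h]|))); first exact: leq_mul.
  by apply: ltn_mul; apply: key.
have mstar : mstarCD G = (b * b)%N.
  apply/eqP; rewrite eqn_leq; apply/andP; split; last by rewrite -mB mCD_le_star.
  apply: star_le => H sHG; case: (eqVneq (H : {set hT}) B) => [/val_inj -> | neHB].
    by rewrite mB.
  exact: ltnW (bound H sHG neHB).
split.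
  apply/setP => X; rewrite !inE; apply/idP/eqP.
    case/and3P => gX sXG /eqP E; apply/eqP; apply/negPn/negP => neXB.
    have := bound (Group gX) sXG neXB; by rewrite /= E mstar ltnn.
  by move=> ->; rewrite groupP sBG mB mstar eqxx.
apply/negP => abG.
have : ~~ (G \subset B).
  apply/negP => sGB; move/negP: neBG; apply; by rewrite eqEsubset sBG sGB.
case/subsetPn => g Gg nBg; apply/negP: nBg; rewrite negbK; apply: cBall => //.
rewrite sub_cent1; apply: (subsetP _ _ Gg).
by rewrite centsC; exact: subset_trans sBG abG.
Qed.

End Crit.

Section Holo.
Variables (gT : finGroupType) (A : {group gT}).

Definition tr_fun (a : gT) (x : gT) := if (x \in A) && (a \in A) then x * a else x.

Lemma tr_inj a : injective (tr_fun a).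
Proof.
move=> x y; rewrite /tr_fun.
case Aa: (a \in A); rewrite ?andbF ?andbT //.
case Ax: (x \in A); case Ay: (y \in A) => //.
- exact: mulIg.
- by move=> E; move: Ay; rewrite -E groupM.
- by move=> E; move: Ax; rewrite E groupM.
Qed.

Definition tr a : {perm gT} := perm (@tr_inj a).

Lemma trE a x : tr a x = tr_fun a x.
Proof. by rewrite permE. Qed.

Lemma tr_morphM : {in A &, {morph tr : a b / a * b}}.
Proof.
move=> a b Aa Ab; apply/permP => x; rewrite permM !trE /tr_fun groupM // Aa Ab !andbT.
by case Ax: (x \in A); rewrite ?groupM ?Ax //= mulgA.
Qed.

Canonical tr_morphism := Morphism tr_morphM.

Lemma tr1 a : a \in A -> tr a 1 = a.
Proof. by move=> Aa; rewrite trE /tr_fun group1 Aa mul1g. Qed.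

Lemma injm_tr : 'injm tr_morphism.
Proof.
apply/injmP => a b Aa Ab /= E.
by rewrite -(tr1 Aa) -(tr1 Ab) E.
Qed.

Lemma Aut1_fix (al : {perm gT}) : al \in Aut A -> al 1 = 1.
Proof. by move=> AutA; have := morph1 (autm AutA); rewrite autmE. Qed.

Lemma tr_conj (al : {perm gT}) a : al \in Aut A -> a \in A -> tr a ^ al = tr (al a).
Proof.
move=> AutA Aa; have AutV : al^-1 \in Aut A by rewrite groupV.
have Aaa : al a \in A by rewrite Aut_closed.
apply/permP => x; rewrite conjgE !permM !trE /tr_fun Aa Aaa !andbT.
case Ax: (x \in A).
  have Ax' : al^-1 x \in A by rewrite Aut_closed.
  rewrite Ax'; move/morphicP: (Aut_morphic AutA) => mor.
  by rewrite mor // -permM mulVg perm1.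
have nAx : x \notin A by rewrite Ax.
by rewrite (out_Aut AutV) // (negPf nAx) (out_Aut AutA).
Qed.


Lemma holo_CD (abA : abelian A) (al : {perm gT}) :
  al \in Aut A -> al != 1 ->
  (forall k, al ^+ k != 1 -> (#[al] * #|[set x in A | (al ^+ k) x == x]| < #|A|)%N) ->
  exists (hT : finGroupType) (G B : {group hT}),
    ~~ abelian G /\ B \subset G /\ B \isog A /\ CDlattice G = [set (B : {set hT})].
Proof.
move=> AutA ne1 cond.
pose B := (tr_morphism @* A)%G.
have injt := injm_tr.
have abB : abelian B := morphim_abelian _ abA.
have nBal : al \in 'N(B).
  apply/normP; apply/eqP; rewrite eqEcard cardJg leqnn andbT.
  apply/subsetP => y; rewrite mem_conjg => /morphimP[a _ Aa Ey].
  have -> : y = tr a ^ al by rewrite -Ey conjgKV.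
  rewrite tr_conj //; apply: mem_morphim => //; exact: Aut_closed.
have nBc : <[al]> \subset 'N(B) by rewrite cycle_subG.
pose G := (B <*> <[al]>)%G.
have defG : G :=: B * <[al]> := norm_joinEr nBc.
have TI : B :&: <[al]> = 1.
  apply/eqP; rewrite eqEsubset sub1G andbT; apply/subsetP => y /setIP[].
  case/morphimP => a _ Aa -> /cycleP[k Ek].
  have Autk : al ^+ k \in Aut A by rewrite groupX.
  have : tr a 1 = 1 by rewrite Ek Aut1_fix.
  by rewrite tr1 // => ->; rewrite (morph1 tr_morphism) inE.
have cardG : #|G| = (#|B| * #[al])%N.
  by rewrite defG; have := mul_cardG B <[al]>; rewrite TI cards1 muln1 => <-.
have sBG : B \subset G := joing_subl _ _.
have idx : #|G : B| = #[al].
  by apply/eqP; rewrite -(eqn_pmul2l (cardG_gt0 B)) Lagrange // cardG.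
have cardB : #|B| = #|A| := card_injm injt (subxx _).
have neBG : (B : {set _}) != G.
  apply/eqP => E.
  have Bal : al \in B by rewrite E; apply: (subsetP (joing_subr _ _)); exact: cycle_id.
  have : al \in B :&: <[al]> by rewrite inE Bal cycle_id.
  by rewrite TI inE; apply/negP.
have key : forall g, g \in G -> g \notin B -> (#|G : B| * #|'C_B[g]| < #|B|)%N.
  move=> g Gg nB; move: Gg nB; rewrite {1}defG => /mulsgP[y z By /cycleP[k ->] ->] nB.
  have nk : al ^+ k != 1.
    by apply: contra nB => /eqP ->; rewrite mulg1.
  have Autk : al ^+ k \in Aut A by rewrite groupX.
  rewrite idx cardB; apply: leq_ltn_trans (cond k nk); rewrite leq_mul2l; apply/orP; right.
  have Hi := leq_imset_card tr [set x in A | (al ^+ k) x == x].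
  apply: (leq_trans _ Hi); apply: subset_leq_card.
  apply/subsetP => w /subcent1P[Bw cw].
  have cyw : commute y w by apply: (centsP abB).
  move: Bw cw cyw; case/morphimP => c _ Ac -> cw cyw.
  apply/imsetP; exists c => //; rewrite inE Ac /=.
  have czw : al ^+ k * tr c = tr c * al ^+ k.
    apply: (@mulgI _ y); by rewrite mulgA cw mulgA -cyw -mulgA.
  apply/eqP; apply: (injmP injt) => //=; first exact: Aut_closed.
  by rewrite -tr_conj // conjgE -czw mulKg.
have [CD nab] := crit sBG abB neBG key.
exists _, G, B; split => //; split => //; split => //.
by rewrite isog_sym sub_isog.
Qed.

End Holo.

Definition CDgoal (gT : finGroupType) (A : {group gT}) := exists (hT : finGroupType) (G B : {group hT}),
    ~~ abelian G /\ B \subset G /\ B \isog A /\ CDlattice G = [set (B : {set hT})].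

Section Inv.
Variables (gT : finGroupType) (A : {group gT}).
Hypothesis abA : abelian A.

Definition inv_fun (x : gT) := if x \in A then x^-1 else x.
Lemma inv_fun_inj : injective inv_fun.
Proof.
move=> x y; rewrite /inv_fun.
case Ax: (x \in A); case Ay: (y \in A) => //.
- exact: invg_inj.
- by move=> E; move: Ay; rewrite -E groupV Ax.
- by move=> E; move: Ax; rewrite E groupV Ay.
Qed.
Definition iota_p : {perm gT} := perm inv_fun_inj.

Lemma iotaE x : iota_p x = inv_fun x. Proof. by rewrite permE. Qed.

Lemma iota_Aut : iota_p \in Aut A.
Proof.
rewrite inE; apply/andP; split.
  apply/subsetP => x; rewrite inE iotaE /inv_fun; by case: (x \in A); rewrite ?eqxx.
apply/morphicP => x y Ax Ay; rewrite !iotaE /inv_fun groupM // Ax Ay invMg.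
by apply: (centsP abA); rewrite groupV.
Qed.

Lemma iota2 : iota_p ^+ 2 = 1.
Proof.
apply/permP => x; rewrite expgS expg1 permM !iotaE perm1 /inv_fun.
by case Ax: (x \in A); rewrite ?groupV ?Ax ?invgK.
Qed.

Lemma case_inv : (2 * #|[set x in A | x^-1 == x]| < #|A|)%N -> CDgoal A.
Proof.
move=> lt.
have ne1 : iota_p != 1.
  apply/eqP => E; move: lt; rewrite ltnNge; case/negP.
  apply: (@leq_trans #|[set x in A | x^-1 == x]|); last by rewrite leq_pmull.
  apply: subset_leq_card; apply/subsetP => x Ax; rewrite inE Ax /=.
  by move/permP: E => /(_ x); rewrite perm1 iotaE /inv_fun Ax => ->.
rewrite /CDgoal. have H := holo_CD abA iota_Aut ne1. apply: H => k nk.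
have ek : iota_p ^+ k = iota_p.
  rewrite -(expg_mod k iota2); move: nk; rewrite -(expg_mod k iota2).
  by case: (k %% 2) (ltn_pmod k (isT : 0 < 2)) => [|[|]] //; rewrite eqxx.
rewrite ek; apply: leq_ltn_trans lt; apply: leq_mul.
  by apply: dvdn_leq => //; rewrite order_dvdn iota2.
apply: subset_leq_card; apply/subsetP => x; rewrite !inE iotaE /inv_fun.
by case Ax: (x \in A) => //= /eqP ->; rewrite eqxx.
Qed.

End Inv.

Section Three.
Variables (gT : finGroupType) (A K L : {group gT}) (a b : gT).
Hypotheses (abA : abelian A) (oa : #[a] = 2) (ob : #[b] = 2).
Hypotheses (dK : <[b]> \x L = K) (dA : <[a]> \x K = A).

Let sKA : K \subset A. Proof. by rewrite -(dprodW dA) mulG_subr. Qed.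
Let saA : <[a]> \subset A. Proof. by rewrite -(dprodW dA) mulG_subl. Qed.
Let sLK : L \subset K. Proof. by rewrite -(dprodW dK) mulG_subr. Qed.
Let sbK : <[b]> \subset K. Proof. by rewrite -(dprodW dK) mulG_subl. Qed.
Let sLA : L \subset A. Proof. exact: subset_trans sLK sKA. Qed.
Let Aa : a \in A. Proof. by rewrite -cycle_subG. Qed.
Let Kb : b \in K. Proof. by rewrite -cycle_subG. Qed.
Let Ab : b \in A. Proof. exact: (subsetP sKA). Qed.
Let cab : commute a b. Proof. exact: (centsP abA). Qed.
Let TI1 : <[a]> :&: K = 1. Proof. by case/dprodP: dA. Qed.
Let a1 : a != 1. Proof. by apply/eqP => E; move: oa; rewrite E order1. Qed.
Let b1 : b != 1. Proof. by apply/eqP => E; move: ob; rewrite E order1. Qed.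
Let ab_ne : a != b.
Proof.
apply/eqP => E; move/eqP: a1; apply; apply/set1gP; rewrite -TI1 inE cycle_id /=.
by rewrite E.
Qed.
Let bb : b * b = 1. Proof. have H := expg_order b; rewrite ob in H; exact H. Qed.
Let aa : a * a = 1. Proof. have H := expg_order a; rewrite oa in H; exact H. Qed.

Let d1 : #[b] %| #[a]. Proof. by rewrite oa ob. Qed.
Let d2 : #[a * b] %| #[b].
Proof. by rewrite ob order_dvdn expgMn // -{1}oa -ob !expg_order mulg1. Qed.

Let fa := eltm_morphism d1.
Let fb := eltm_morphism d2.
Let fL := idm_morphism L.

Let cf1 : fL @* L \subset 'C(fb @* <[b]>).
Proof.
rewrite morphim_idm // morphim_cycle ?cycle_id //= eltm_id.
apply: sub_abelian_cent2 abA sLA _; rewrite cycle_subG; exact: groupM.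
Qed.

Let g := dprodm_morphism dK cf1.

Let imgK : g @* K \subset A.
Proof.
rewrite im_dprodm morphim_idm // morphim_cycle ?cycle_id //= eltm_id.
by apply: mul_subG => //; rewrite cycle_subG groupM.
Qed.

Let cf2 : g @* K \subset 'C(fa @* <[a]>).
Proof.
rewrite morphim_cycle ?cycle_id //= eltm_id.
apply: sub_abelian_cent2 abA imgK _; by rewrite cycle_subG.
Qed.

Let f := dprodm_morphism dA cf2.

Let fE u v l : u \in <[a]> -> v \in <[b]> -> l \in L -> f (u * (v * l)) = fa u * (fb v * l).
Proof.
move=> ua vb Ll.
have Kvl : v * l \in K by rewrite -(dprodW dK) mem_mulg.
rewrite /f /= dprodmE //; congr (_ * _).
by rewrite /g /= dprodmE.
Qed.

Let f_l l : l \in L -> f l = l.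
Proof. by move=> Ll; have := fE (group1 _) (group1 _) Ll; rewrite !mul1g !morph1 !mul1g. Qed.
Let f_al l : l \in L -> f (a * l) = b * l.
Proof. by move=> Ll; have := fE (cycle_id a) (group1 _) Ll; rewrite !mul1g morph1 mul1g /= eltm_id. Qed.
Let f_bl l : l \in L -> f (b * l) = a * b * l.
Proof. by move=> Ll; have := fE (group1 _) (cycle_id b) Ll; rewrite !mul1g morph1 mul1g /= eltm_id. Qed.
Let f_abl l : l \in L -> f (a * b * l) = a * l.
Proof.
move=> Ll; have := fE (cycle_id a) (cycle_id b) Ll; rewrite mulgA => -> /=; rewrite !eltm_id.
by rewrite !mulgA -cab -(mulgA a b b) bb mulg1.
Qed.

Let decomp x : x \in A -> exists2 l, l \in L & [\/ x = l, x = a * l, x = b * l | x = a * b * l].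
Proof.
move=> Ax; have [u [k [ua kK -> _]]] := mem_dprod dA Ax.
have [v [l [vb lL -> _]]] := mem_dprod dK kK.
exists l => //.
move: ua vb; rewrite (cycle2g oa) (cycle2g ob) !inE => /orP[]/eqP-> /orP[]/eqP->; rewrite ?mul1g ?mulgA.
- by constructor 1.
- by constructor 3.
- by constructor 2.
- by constructor 4.
Qed.


Let mem_al l : l \in L -> a * l \in A. Proof. by move=> Ll; rewrite groupM // (subsetP sLA). Qed.
Let mem_bl l : l \in L -> b * l \in A. Proof. by move=> Ll; rewrite groupM // (subsetP sLA). Qed.
Let mem_abl l : l \in L -> a * b * l \in A. Proof. by move=> Ll; rewrite !groupM // (subsetP sLA). Qed.
Let mem_l l : l \in L -> l \in A. Proof. by move=> Ll; rewrite (subsetP sLA). Qed.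

Let fA : f @* A = A.
Proof.
apply/eqP; rewrite eqEsubset; apply/andP; split.
  rewrite /f im_dprodm morphim_cycle ?cycle_id //= eltm_id.
  by apply: mul_subG => //; rewrite cycle_subG.
apply/subsetP => x /decomp[l Ll [] ->].
- by rewrite -{1}(f_l Ll) mem_morphim ?mem_l.
- by rewrite -(f_abl Ll) mem_morphim ?mem_abl.
- by rewrite -(f_al Ll) mem_morphim ?mem_al.
- by rewrite -(f_bl Ll) mem_morphim ?mem_bl.
Qed.

Let injf : 'injm f. Proof. by rewrite -card_im_injm fA. Qed.

Let al := aut injf fA.
Let AutA : al \in Aut A. Proof. exact: Aut_aut. Qed.
Let alE x : x \in A -> al x = f x. Proof. exact: autE. Qed.

Let al3 : al ^+ 3 = 1.
Proof.
apply: (eq_Aut (groupX 3 AutA) (group1 _)) => x Ax; rewrite permX perm1; change (al (al (al x)) = x).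
case/decomp: Ax => l Ll [] ->.
- by rewrite (alE (mem_l Ll)) (f_l Ll) (alE (mem_l Ll)) (f_l Ll) (alE (mem_l Ll)) (f_l Ll).
- by rewrite (alE (mem_al Ll)) (f_al Ll) (alE (mem_bl Ll)) (f_bl Ll) (alE (mem_abl Ll)) (f_abl Ll).
- by rewrite (alE (mem_bl Ll)) (f_bl Ll) (alE (mem_abl Ll)) (f_abl Ll) (alE (mem_al Ll)) (f_al Ll).
- by rewrite (alE (mem_abl Ll)) (f_abl Ll) (alE (mem_al Ll)) (f_al Ll) (alE (mem_bl Ll)) (f_bl Ll).
Qed.

Let al_ne1 : al != 1.
Proof.
apply/eqP => E; move/eqP: ab_ne; apply.
have H1 := alE (mem_al (group1 L)).
rewrite f_al ?group1 // E perm1 !mulg1 in H1; exact H1.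
Qed.

Let fix_al x : x \in A -> al x = x -> x \in L.
Proof.
case/decomp => l Ll [] ->.
- by [].
- rewrite (alE (mem_al Ll)) (f_al Ll) => /mulIg E.
  by move/eqP: ab_ne; rewrite E.
- rewrite (alE (mem_bl Ll)) (f_bl Ll) => /mulIg E; move/eqP: a1; case.
  by apply: (@mulIg _ b); rewrite mul1g.
- rewrite (alE (mem_abl Ll)) (f_abl Ll) -mulgA => /mulgI E; move/eqP: b1; case.
  by apply: (@mulIg _ l); rewrite mul1g.
Qed.

Lemma case_three : CDgoal A.
Proof.
rewrite /CDgoal; have H := holo_CD abA AutA al_ne1; apply: H => k nk.
have cardA : #|A| = (4 * #|L|)%N.
  rewrite -(dprod_card dA) -(dprod_card dK) -/(order a) -/(order b) oa ob.
  by rewrite mulnA.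
have fixL : [set x in A | (al ^+ k) x == x] \subset L.
  apply/subsetP => x; rewrite inE => /andP[Ax /eqP fx]; apply: fix_al => //.
  move: fx nk; rewrite -(expg_mod k al3).
  have : k %% 3 < 3 by rewrite ltn_pmod.
  case: (k %% 3) => [_ |[_ |[_ |//]]].
  - by rewrite expg0 eqxx.
  - by rewrite expg1.
  - move=> f2 _; have : (al ^+ 4) x = x by rewrite (expgD al 2 2) permM !f2.
    by rewrite -(expg_mod 4 al3) expg1.
rewrite cardA; apply: (@leq_ltn_trans (3 * #|L|)).
  apply: leq_mul; last exact: subset_leq_card.
  by apply: dvdn_leq => //; rewrite order_dvdn al3.
by rewrite ltn_pmul2r // cardG_gt0.
Qed.

End Three.

Lemma cyc_isog (gT : finGroupType) (x : gT) n : #[x] = n -> 1 < n -> <[x]> \isog [set: 'Z_n].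
Proof.
move=> ox n1; rewrite isog_sym; have := Zp_isog x; rewrite ox /Zp (ifT _ _ n1); exact.
Qed.

Lemma order2 (gT : finGroupType) (x : gT) : x ^+ 2 = 1 -> x != 1 -> #[x] = 2.
Proof.
move=> x2 x1; have : #[x] %| 2 by rewrite order_dvdn x2.
have : (#[x] != 1)%N by rewrite order_eq1.
have : 0 < #[x] by rewrite order_gt0.
by case: #[x] => [|[|[|n]]].
Qed.

Lemma split_elem (gT : finGroupType) (K : {group gT}) : 2.-abelem K -> K :!=: 1 ->
  exists b, exists K1 : {group gT}, #[b] = 2 /\ <[b]> \x K1 = K.
Proof.
move=> eK ntK; case/trivgPn: ntK => b Kb b1.
have [abK expK] := abelemP (isT : prime 2) eK.
exists b; have ob := order2 (expK b Kb) b1.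
have sbK : <[b]> \subset K by rewrite cycle_subG.
case/splitsP: (abelem_splits eK sbK) => K1 /complP[TI defK].
exists K1; split => //; rewrite dprodE //.
apply: sub_abelian_cent2 abK _ sbK; rewrite -defK mulG_subr //.
Qed.

Lemma regroup (gT : finGroupType) (G K X Y Z : {group gT}) : abelian G ->
  Y \x Z = K -> X \x K = G -> exists W : {group gT}, X \x Z = W /\ Y \x W = G.
Proof.
move=> abG dK dG.
have sKG : K \subset G by rewrite -(dprodW dG) mulG_subr.
have sXG : X \subset G by rewrite -(dprodW dG) mulG_subl.
have sZK : Z \subset K by rewrite -(dprodW dK) mulG_subr.
have sZG := subset_trans sZK sKG.
have TI : X :&: Z = 1.
  apply/trivgP; case/dprodP: dG => _ _ _ <-; exact: setIS.
exists (X <*> Z)%G; split; first by rewrite dprodEY // (sub_abelian_cent2 abG).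
rewrite /= -dprodEY ?(sub_abelian_cent2 abG) //.
by rewrite dprodA [Y \x X]dprodC -dprodA dK.
Qed.

Lemma Z2Z4_isog (gT : finGroupType) (A : {group gT}) (x k : gT) :
  #[x] = 4 -> #[k] = 2 -> <[x]> \x <[k]> = A -> A \isog [set: ('Z_2 * 'Z_4)%type].
Proof.
move=> ox ok dA.
have -> : [set: ('Z_2 * 'Z_4)%type] = setX [set: 'Z_2] [set: 'Z_4].
  by apply/setP => -[u v]; rewrite !inE.
rewrite dprodC in dA.
apply: (isog_dprod dA (setX_dprod [set: 'Z_2]%G [set: 'Z_4]%G)).
  exact: isog_trans (cyc_isog ok _) (isog_setX1 _ _).
exact: isog_trans (cyc_isog ox _) (isog_set1X _ _).
Qed.

Lemma rev_dir (gT : finGroupType) (A : {group gT}) : abelian A ->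
  A :!=: 1 -> ~~ (A \isog [set: 'Z_2]) -> ~~ (A \isog [set: 'Z_4]) ->
  ~~ (A \isog [set: ('Z_2 * 'Z_4)%type]) -> CDgoal A.
Proof.
move=> abA ntA nZ2 nZ4 nZ24.
pose Om := [set y in A | y^-1 == y].
have gOm : group_set Om.
  apply/group_setP; split; first by rewrite inE group1 invg1 eqxx.
  move=> y z; rewrite !inE => /andP[Ay /eqP iy] /andP[Az /eqP iz].
  by rewrite groupM // invMg iy iz; apply/eqP/(centsP abA).
pose OmG := Group gOm.
have sOA : Om \subset A by apply/subsetP => y; rewrite inE => /andP[].
case: (ltnP (2 * #|Om|) #|A|) => [lt | ge]; first exact: case_inv.
case: (boolP (A \subset Om)) => [sAO | ].
  have eA : 2.-abelem A.
    apply/(abelemP (isT : prime 2)); split => // y Ay.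
    have := subsetP sAO y Ay; rewrite inE => /andP[_ /eqP iy].
    by rewrite expgS expg1 -{1}iy mulVg.
  have [a [K [oa dA]]] := split_elem eA ntA.
  have sKA : K \subset A by rewrite -(dprodW dA) mulG_subr.
  case: (eqVneq (K : {set gT}) 1) => [K1 | ntK].
    move: nZ2; rewrite -dA K1 dprodg1 cyc_isog //.
  have [b [L [ob dK]]] := split_elem (abelemS sKA eA) ntK.
  exact: case_three abA oa ob dK dA.
case/subsetPn => x Ax nOx.
have OAx : forall y, y \in A -> y \in Om \/ y * x^-1 \in Om.
  have sOxA : Om :* x \subset A.
    apply/subsetP => y; rewrite mem_rcoset => Oyx.
    by rewrite -(mulgKV x y) groupM // (subsetP sOA).
  have disj : Om :&: (Om :* x) = set0.
    apply/setP => y; rewrite in_setI in_set0 mem_rcoset; apply/negP => /andP[Oy Oyx].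
    move/negP: nOx; apply.
    have -> : x = (y * x^-1)^-1 * y by rewrite invMg invgK -mulgA mulVg mulg1.
    by rewrite (@groupM _ OmG) // (@groupV _ OmG).
  have eqA : Om :|: (Om :* x) = A.
    apply/eqP; rewrite eqEcard subUset sOA sOxA /= cardsU disj cards0 subn0.
    by rewrite card_rcoset addnn -mul2n.
  by move=> y; rewrite -eqA in_setU mem_rcoset => /orP[]; [left | right].
have iO : forall y, y \in Om -> y ^+ 2 = 1.
  by move=> y; rewrite inE => /andP[_ /eqP iy]; rewrite expgS expg1 -{1}iy mulVg.
have x2ne : x ^+ 2 != 1.
  apply/eqP => x2; move/negP: nOx; apply; rewrite inE Ax eq_invg_mul /=.
  by rewrite -{2}(expg1 x) -expgS x2.
have sq : forall y, y \in A -> y ^+ 2 = 1 \/ y ^+ 2 = x ^+ 2.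
  move=> y Ay; case: (OAx y Ay) => [Oy | Oyx]; first by left; exact: iO.
  right; have -> : y = (y * x^-1) * x by rewrite mulgKV.
  have cw : commute (y * x^-1) x.
    by apply: (centsP abA) => //; rewrite groupM ?groupV.
  by rewrite expgMn // (iO _ Oyx) mul1g.
have x4 : x ^+ 4 = 1.
  have A2 : x ^+ 2 \in A by rewrite groupX.
  case: (sq _ A2) => E; first by rewrite -E -expgM.
  move/eqP: x2ne; case; apply: (@mulgI _ (x ^+ 2)); rewrite mulg1.
  by rewrite -expgD -E -expgM.
have ox : #[x] = 4.
  have d4 : #[x] %| 4 by rewrite order_dvdn x4.
  have n2 : ~~ (#[x] %| 2) by rewrite order_dvdn.
  have : 0 < #[x] by rewrite order_gt0.
  move: d4 n2; case: #[x] => [|[|[|[|[|n]]]]] //.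
have expA : #[x] = exponent A.
  apply/eqP; rewrite eqn_dvd dvdn_exponent // ox; apply/exponentP => y Ay.
  rewrite (expgM y 2 2); case: (sq y Ay) => ->; first by rewrite expg1n.
  by rewrite -expgM.
case/splitsP: (abelian_splits Ax expA abA) => K /complP[TI defA].
have sKA : K \subset A by rewrite -defA mulG_subr.
have dA : <[x]> \x K = A.
  rewrite dprodE // (sub_abelian_cent2 abA) //; by rewrite cycle_subG.
have eK : 2.-abelem K.
  apply/(abelemP (isT : prime 2)); split; first exact: abelianS sKA abA.
  move=> k Kk; case: (sq k (subsetP sKA k Kk)) => // E.
  move/eqP: x2ne; case; apply/set1gP; rewrite -TI inE mem_cycle /= -E.
  by rewrite groupX.
case: (eqVneq (K : {set gT}) 1) => [K1 | ntK].
  move: nZ4; rewrite -dA K1 dprodg1 cyc_isog //.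
have [b [K1 [ob dK]]] := split_elem eK ntK.
have sK1K : K1 \subset K by rewrite -(dprodW dK) mulG_subr.
case: (eqVneq (K1 : {set gT}) 1) => [K11 | ntK1].
  move: nZ24; rewrite (Z2Z4_isog ox ob) //.
  by rewrite -dA -dK K11 dprodg1.
have [c [L [oc dK1]]] := split_elem (abelemS sK1K eK) ntK1.
have [W1 [dW1 dA']] := regroup abA dK dA.
have sW1A : W1 \subset A by rewrite -(dprodW dA') mulG_subr.
have [W2 [dW2 dW1']] := regroup (abelianS sW1A abA) dK1 dW1.
exact: case_three abA ob oc dW1' dA'.
Qed.

Lemma morphX_fun (aT rT : finGroupType) (t : aT -> rT) : {morph t : x y / x * y} ->
  forall x n, t (x ^+ n) = t x ^+ n.
Proof.
move=> tM x n.
have t1 : t 1 = 1 by apply: (@mulgI _ (t 1)); rewrite -tM !mulg1.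
elim: n => [|n IH]; first by rewrite !expg0.
by rewrite !expgS tM IH.
Qed.

Notation C24 := ('Z_2 * 'Z_4)%type.
Definition e1 : C24 := (Zp1, Zp0).
Definition e2 : C24 := (Zp0, Zp1).
Definition Ff (c1 c2 : C24) (x : C24) : C24 := c1 ^+ (nat_of_ord x.1) * c2 ^+ (nat_of_ord x.2).
Definition elts : seq C24 := [seq (inZp i, inZp j) | i <- iota 0 2, j <- iota 0 4].
Lemma mem_elts x : x \in elts.
Proof. case: x => [[[|[|a]] Ha] [[|[|[|[|b]]]] Hb]] //. Qed.
Lemma uniq_elts : uniq elts. Proof. by vm_compute. Qed.
Definition chkF (F : C24 -> C24) : bool :=
    (all (fun x => all (fun y => F (x * y) == F x * F y) elts) elts && uniq (map F elts)) ==>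
    (all (fun x => F (F (F (F x))) == x) elts &&
     (all (fun x => F (F x) == x) elts ==> (4 <= count (fun x => F x == x) elts))).
Definition chk24 : bool := all (fun c1 => all (fun c2 => chkF (Ff c1 c2)) elts) elts.
Lemma chk24_ok : chk24. Proof. by vm_compute. Qed.
Lemma dec24 : all (fun x => x == e1 ^+ (nat_of_ord x.1) * e2 ^+ (nat_of_ord x.2)) elts.
Proof. by vm_compute. Qed.

Lemma Z24_conc (t : C24 -> C24) : {morph t : x y / x * y} -> injective t ->
  (forall c, t (t (t (t c))) = c) /\ ((forall c, t (t c) = c) -> 4 <= #|[set c | t c == c]|).
Proof.
move=> tM tI.
have tF : forall x, t x = Ff (t e1) (t e2) x.
  move=> x; have /allP/(_ x (mem_elts x))/eqP {1}-> := dec24.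
  by rewrite tM !(morphX_fun tM).
have := chk24_ok; move/allP/(_ _ (mem_elts (t e1)))/allP/(_ _ (mem_elts (t e2))).
set F := Ff _ _ => H.
have eqF : t =1 F := tF.
rewrite /chkF in H.
match type of H with is_true (?p ==> _) => have prem : p end.
  apply/andP; split.
    by apply/allP => x _; apply/allP => y _; rewrite -!eqF tM.
  by rewrite map_inj_uniq ?uniq_elts // => x y; rewrite -!eqF; exact: tI.
have /andP[/allP h4 h2] := implyP H prem; split.
  by move=> c; rewrite !eqF; apply/eqP; exact: h4 (mem_elts c).
move=> t2.
have : all (fun x => F (F x) == x) elts by apply/allP => x _; rewrite -!eqF t2.
move=> /(implyP h2) c4.
pose s := filter (fun x => F x == x) elts.
have us : uniq s by rewrite filter_uniq // uniq_elts.
apply: (leq_trans c4); rewrite -size_filter -/s -(card_uniqP us).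
by apply: subset_leq_card; apply/subsetP => x; rewrite mem_filter inE eqF => /andP[].
Qed.

Definition elts4 : seq 'Z_4 := [seq inZp i | i <- iota 0 4].
Lemma mem_elts4 x : x \in elts4.
Proof. case: x => [[|[|[|[|b]]]] Hb] //. Qed.
Lemma uniq_elts4 : uniq elts4. Proof. by vm_compute. Qed.
Definition chk4 : bool :=
  all (fun c => (all (fun x => all (fun y => c ^+ (nat_of_ord (x * y)) == c ^+ (nat_of_ord x) * c ^+ (nat_of_ord y)) elts4) elts4
        && uniq (map (fun x => c ^+ (nat_of_ord x)) elts4)) ==>
        all (fun x => c ^+ (nat_of_ord (c ^+ (nat_of_ord x))) == x) elts4) elts4.
Lemma chk4_ok : chk4. Proof. by vm_compute. Qed.
Lemma dec4 : all (fun x : 'Z_4 => x == Zp1 ^+ (nat_of_ord x)) elts4.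
Proof. by vm_compute. Qed.

Lemma Z4_conc (t : 'Z_4 -> 'Z_4) : {morph t : x y / x * y} -> injective t ->
  forall c, t (t c) = c.
Proof.
move=> tM tI.
have tF : forall x, t x = t Zp1 ^+ (nat_of_ord x).
  move=> x; have /allP/(_ x (mem_elts4 x))/eqP {1}-> := dec4.
  by rewrite (morphX_fun tM).
have := chk4_ok; move/allP/(_ _ (mem_elts4 (t Zp1))) => H.
match type of H with is_true (?p ==> _) => have prem : p end.
  apply/andP; split.
    by apply/allP => x _; apply/allP => y _; rewrite -!tF tM.
  by rewrite map_inj_uniq ?(@uniq_elts4) // => x y; rewrite -!tF; exact: tI.
have /allP h := implyP H prem; move=> c; rewrite (tF c) (tF (_ ^+ _)); apply/eqP; exact: h (mem_elts4 c).
Qed.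

Lemma transport (C hT : finGroupType) (B : {group hT}) (f : {morphism [set: C] >-> hT})
  (isof : isom [set: C] B f) (g : hT) : g \in 'N(B) ->
  exists t : C -> C, [/\ {morph t : x y / x * y}, injective t & forall c, f (t c) = f c ^ g].
Proof.
move=> nBg; have [injf imf] := isomP isof.
have fB : forall c, f c \in B by move=> c; rewrite -imf mem_morphim ?inE.
have fgB : forall c, f c ^ g \in f @* [set: C] by move=> c; rewrite imf memJ_norm.
exists (fun c => invm injf (f c ^ g)).
have tE : forall c, f (invm injf (f c ^ g)) = f c ^ g by move=> c; rewrite invmK.
have finj : forall x y : C, f x = f y -> x = y.
  by move=> x y; apply: (injmP injf); rewrite inE.
split => //.
  move=> x y; apply: finj; rewrite tE [RHS]morphM ?inE // !tE.
  by rewrite morphM ?inE // conjMg.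
by move=> x y /(congr1 f); rewrite !tE => /conjg_inj; exact: finj.
Qed.

Section Fwd.
Variables (hT : finGroupType) (G B : {group hT}).
Hypotheses (nabG : ~~ abelian G) (sBG : B \subset G) (abB : abelian B).
Hypothesis CD : CDlattice G = [set (B : {set hT})].

Lemma CD_B : mCD G B = mstarCD G.
Proof. by have := set11 (B : {set hT}); rewrite -CD CD_memE => /andP[_ /eqP]. Qed.

Lemma CD_uniq (H : {group hT}) : H \subset G -> mCD G H = mstarCD G -> (H : {set hT}) = B.
Proof. by move=> sHG E; apply/set1P; rewrite -CD CD_memE sHG E eqxx. Qed.

Lemma nBG : G \subset 'N(B).
Proof.
apply/subsetP => g Gg; apply/normP; apply: (@CD_uniq (B :^ g)%G).
  by rewrite -(conjGid Gg) conjSg.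
rewrite -CD_B /mCD /= cardJg; congr (_ * _)%N.
by rewrite -{1}(conjGid Gg) centJ -conjIg cardJg.
Qed.

Lemma cB : 'C_G(B) = B.
Proof.
apply: CD_uniq; first exact: subsetIl.
apply/eqP; rewrite eqn_leq mCD_le_star ?subsetIl //= -CD_B /mCD.
rewrite mulnC leq_mul2l; apply/orP; right; apply: subset_leq_card.
rewrite subsetI sBG centsC; exact: subsetIr.
Qed.

Lemma neBG : (B : {set hT}) != G.
Proof. by apply: contraNneq nabG => <-. Qed.

Lemma mG : (#|G| * #|'Z(G)| < #|B| * #|B|)%N.
Proof.
have := CD_B; rewrite /mCD cB => E.
rewrite ltn_neqAle; apply/andP; split.
  apply/negP => /eqP E2; move/negP: neBG; apply; apply/eqP; apply/esym.
  by apply: CD_uniq => //; rewrite -E -E2.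
by rewrite E; apply: mCD_le_star.
Qed.

Lemma two_group n : (forall g, g \in G -> g ^+ (2 ^ n) = 1) -> 2.-group G.
Proof.
move=> Hn; apply/pgroupP => p pp pG; have [x Gx ox] := Cauchy pp pG.
have : p %| 2 ^ n by rewrite -ox order_dvdn Hn.
by rewrite Euclid_dvdX // dvdn_prime2 // => /andP[].
Qed.

Lemma Z_gt1 : 2.-group G -> 1 < #|'Z(G)|.
Proof.
move=> pG; rewrite cardG_gt1; apply/negP => /eqP Z1.
have G1 := trivg_center_pgroup pG Z1; move/negP: nabG; apply.
by rewrite G1 abelian1.
Qed.

Lemma card_ltG : #|B| < #|G|.
Proof. by apply: proper_card; rewrite properEneq neBG sBG. Qed.

End Fwd.


Section Fwd2.
Variables (hT : finGroupType) (G B : {group hT}).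
Hypotheses (nabG : ~~ abelian G) (sBG : B \subset G) (abB : abelian B).
Hypothesis CD : CDlattice G = [set (B : {set hT})].

Let mG := mG nabG sBG abB CD.
Let cB := cB sBG CD.
Let nBG := nBG sBG CD.
Let ltBG := card_ltG nabG sBG abB.

Lemma no1 : B :!=: 1.
Proof.
apply/negP => /eqP B1; move/negP: nabG; apply.
have : G :=: B by rewrite -cB B1 cent1T setIT.
by move=> ->.
Qed.

Lemma dvdBG : #|B| %| #|G|. Proof. exact: cardSg. Qed.

Lemma noZ2 : #|B| != 2.
Proof.
apply/eqP => B2; move: mG ltBG dvdBG; rewrite B2.
have : 0 < #|'Z(G)| by rewrite cardG_gt0.
case: #|'Z(G)| => // z _; case: #|G| => [|[|[|[|n]]]] //.
by rewrite mulnS.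
Qed.

Lemma sq_in_cent (C : finGroupType) (f : {morphism [set: C] >-> hT}) (isof : isom [set: C] B f)
  (t : C -> C) (g : hT) (k : nat) : (forall c, f (t c) = f c ^ g) -> injective t ->
  (forall c, iter k t c = c) -> g \in G -> g ^+ k \in B.
Proof.
move=> tf tI tk Gg; rewrite -cB inE groupX //=.
have [injf imf] := isomP isof.
apply/centP => y; rewrite -imf => /morphimP[c _ _ ->].
have E : f c ^ (g ^+ k) = f c.
  rewrite -{2}(tk c); elim: k {tk} => [|k IH]; first by rewrite expg0 conjg1.
  by rewrite expgSr conjgM IH /= tf.
by first [rewrite /commute conjgC E | apply: commute_sym; rewrite /commute conjgC E].
Qed.

Lemma noZ4 : ~~ (B \isog [set: 'Z_4]).
Proof.
apply/negP => iso; rewrite isog_sym in iso.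
have cB4 : #|B| = 4 by rewrite -(card_isog iso) cardsT card_ord.
have [f isof] := isog_isom iso.
have sq : forall g, g \in G -> g ^+ 2 \in B.
  move=> g Gg; have [t [tM tI tf]] := transport isof (subsetP nBG g Gg).
  exact: (sq_in_cent (k:=2) isof tf tI (Z4_conc tM tI) Gg).
have pG : 2.-group G.
  apply: (@two_group _ _ 3) => g Gg.
  by rewrite (expgM g 2 4) -cB4 expg_cardG // sq.
have Z2 := Z_gt1 nabG pG.
move: mG ltBG dvdBG Z2; rewrite cB4 => h1 h2 /dvdnP[q hq] h4.
rewrite hq in h1 h2; nia.
Qed.

Lemma noZ24 : ~~ (B \isog [set: ('Z_2 * 'Z_4)%type]).
Proof.
apply/negP => iso; rewrite isog_sym in iso.
have cB8 : #|B| = 8 by rewrite -(card_isog iso) cardsT card_prod !card_ord.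
have [f isof] := isog_isom iso.
have [injf imf] := isomP isof.
have sq : forall g, g \in G -> g ^+ 4 \in B.
  move=> g Gg; have [t [tM tI tf]] := transport isof (subsetP nBG g Gg).
  have [t4 _] := Z24_conc tM tI.
  exact: (sq_in_cent (k:=4) isof tf tI t4 Gg).
have pG : 2.-group G.
  apply: (@two_group _ _ 5) => g Gg.
  by rewrite (expgM g 4 8) -cB8 expg_cardG // sq.
have Z2 := Z_gt1 nabG pG.
have cG : #|G| = 16.
  move: mG ltBG dvdBG Z2; rewrite cB8 => h1 h2 /dvdnP[q hq] h4.
  have d3 : ~~ (3 %| #|G|) by apply/negP => d3; have := pgroupP pG 3 isT d3.
  rewrite hq in h1 h2 d3 *; nia.
have iB : #|G : B| = 2.
  by apply/eqP; rewrite -(eqn_pmul2l (cardG_gt0 B)) Lagrange // cG cB8.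
have [g Gg nBg] : exists2 g, g \in G & g \notin B.
  apply/subsetPn; apply: contra nabG => sGB.
  by rewrite (abelianS sGB).
have g2 : g ^+ 2 \in B.
  have Ng : g \in 'N(B) := subsetP nBG g Gg.
  apply: coset_idr; first by rewrite groupX.
  rewrite morphX //; have Q := mem_quotient B Gg.
  by rewrite -iB -card_quotient // expg_cardG.
have [t [tM tI tf]] := transport isof (subsetP nBG g Gg).
have t2 : forall c, t (t c) = c.
  move=> c; apply: (injmP injf); rewrite ?inE // !tf -conjgM.
  have Bc : f c \in B by rewrite -imf mem_morphim ?inE.
  have g2' : g * g \in B := g2.
  by rewrite conjgE -(centsP abB _ g2' _ Bc) mulKg.
have [_ /(_ t2) fix4] := Z24_conc tM tI.
have sCZ : 'C_B[g] \subset 'Z(G).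
  have defG : B <*> <[g]> = G.
    apply/eqP; rewrite eqEcard join_subG sBG cycle_subG Gg cG /=.
    have sBJ : B \subset B <*> <[g]> := joing_subl _ _.
    have : #|B| < #|B <*> <[g]>|.
      apply: proper_card; rewrite properEneq sBJ andbT; apply/eqP => E.
      by move/negP: nBg; apply; rewrite E; apply: (subsetP (joing_subr _ _)); exact: cycle_id.
    have := cardSg sBJ; rewrite cB8.
    have : #|B <*> <[g]>| <= 16 by rewrite -cG subset_leq_card // join_subG sBG cycle_subG Gg.
    case: #|B <*> <[g]>| => [|n] //.
    do 16! (case: n => [|n] //).
  apply/subsetP => z /setIP[Bz Cz]; rewrite /center -defG inE centY !inE.
  rewrite (subsetP (joing_subl _ _)) //= (subsetP abB) //= cent_cycle; exact: Cz.
have C4 : 4 <= #|'C_B[g]|.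
  apply: (leq_trans fix4).
  rewrite -(card_in_imset (f := f)); last by move=> x y _ _; apply: (injmP injf); rewrite inE.
  apply: subset_leq_card; apply/subsetP => y /imsetP[c]; rewrite inE => /eqP tc ->.
  have Bc : f c \in B by rewrite -imf mem_morphim ?inE.
  rewrite inE Bc /=; apply/cent1P.
  by first [rewrite /commute conjgC -tf tc | apply: commute_sym; rewrite /commute conjgC -tf tc].
move: mG; rewrite cG cB8 ltnNge; case/negP.
by rewrite (leq_mul2l 16 4) ?(leq_trans C4) ?subset_leq_card.
Qed.

End Fwd2.

Unset Implicit Arguments.
Theorem corollary3p4 (gT : finGroupType) (A : {group gT}) (abA : abelian A) :
  (exists (hT : finGroupType) (G B : {group hT}),
      ~~ abelian G /\ B \subset G /\ B \isog A /\ CDlattice G = [set (B : {set hT})])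
  <->
  [/\ A :!=: 1,
      ~~ (A \isog [set: 'Z_2]),
      ~~ (A \isog [set: 'Z_4]) &
      ~~ (A \isog [set: ('Z_2 * 'Z_4)%type])].
Proof.
split.
  case=> hT [G [B [nab [sBG [iso CD]]]]].
  have abB : abelian B by rewrite (isog_abelian iso).
  have cBA := card_isog iso.
  split.
  - apply: contra (no1 nab sBG abB CD); rewrite !trivg_card1 cBA; exact: id.
  - apply/negP => i2; move/negP: (noZ2 nab sBG abB CD); apply.
    by rewrite cBA (card_isog i2) cardsT card_ord.
  - apply/negP => i4; move/negP: (noZ4 nab sBG abB CD); apply.
    exact: isog_trans iso i4.
  - apply/negP => i8; move/negP: (noZ24 nab sBG abB CD); apply.
    exact: isog_trans iso i8.
by case=> h1 h2 h3 h4; exact: rev_dir abA h1 h2 h3 h4.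
Qed.
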